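(* For any poset $P$ on $\{1,2,\ldots,n\}$ and field $k$, the three rings $R_P$, $\mathfrak{gr}(R_P)$ and $S/I^{\mathrm{init}}_P$ share the same $\mathbb{N}^n$-graded Hilbert series, namely $\sum_{f\in\mathcal{A}^{\mathrm{weak}}(P)}\mathbf{x}^f$.
   Context: All posets are finite. $\mathcal{A}^{\mathrm{weak}}(P)$ is the set of maps $f:\{1,\ldots,n\}\to\mathbb{N}$ with $f(i)\ge f(j)$ whenever $i<_Pj$; $\mathbf{x}^f=\prod_ix_i^{f(i)}$. $R_P\subseteq k[x_1,\ldots,x_n]$ is the $k$-span of the $\mathbf{x}^f$, $f\in\mathcal{A}^{\mathrm{weak}}(P)$, $\mathbb{N}^n$-graded with $\mathbf{x}^f$ of degree $f$. $\mathfrak{m}$ is the ideal spanned by $\mathbf{x}^f$ with $f\ne0$, and $\mathfrak{gr}(R_P)=\bigoplus_i\mathfrak{m}^i/\mathfrak{m}^{i+1}$ with the induced $\mathbb{N}^n$-grading. A connected order ideal is a nonempty downward-closed subset whose induced Hasse diagram is connected; $\mathcal{J}_{\mathrm{conn}}(P)$ is the set of these. Two connected order ideals intersect nontrivially if they are neither disjoint nor nested; $\Pi(P)$ is the set of such unordered pairs. $S=k[U_J]_{J\in\mathcal{J}_{\mathrm{conn}}(P)}$, $\mathbb{N}^n$-graded with $U_J$ of degree the indicator vector $\chi_J$, and $I^{\mathrm{init}}_P$ is the ideal of $S$ generated by $U_{J_1}U_{J_2}$ for $\{J_1,J_2\}\in\Pi(P)$. *)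

(* Defs.v *)
From HB Require Import structures.
From mathcomp Require Import all_boot all_order all_algebra.
From mathcomp Require Import mpoly.

Set Implicit Arguments.
Unset Strict Implicit.
Unset Printing Implicit Defensive.

Import GRing.Theory.
Local Open Scope ring_scope.

(* Posets on the ground set {0,...,n-1} (stands for {1,...,n}).       *)

Definition is_poset (n : nat) (le : rel 'I_n) : Prop :=
  [/\ reflexive le, antisymmetric le & transitive le].

Definition plt (n : nat) (le : rel 'I_n) (i j : 'I_n) : bool :=
  (i != j) && le i j.

(* weak P-partitions: f(i) >= f(j) whenever i <_P j; a map 'I_n -> nat
   is encoded as an exponent vector f : 'X_{1..n} *)
Definition weakP (n : nat) (le : rel 'I_n) (f : 'X_{1..n}) : bool :=
  [forall i, forall j, plt le i j ==> (f j <= f i)%N].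

Definition pcover (n : nat) (le : rel 'I_n) (i j : 'I_n) : bool :=
  plt le i j && ~~ [exists z, plt le i z && plt le z j].

Definition is_conn_ideal (n : nat) (le : rel 'I_n) (J : {set 'I_n}) : bool :=
  [&& J != set0,
      [forall x, forall y, (x \in J) && le y x ==> (y \in J)] &
      [forall x, forall y, (x \in J) && (y \in J) ==>
         connect (fun a b => [&& a \in J, b \in J &
                                 pcover le a b || pcover le b a]) x y]].

Definition nontriv_int (n : nat) (J1 J2 : {set 'I_n}) : bool :=
  [&& J1 :&: J2 != set0, ~~ (J1 \subset J2) & ~~ (J2 \subset J1)].

(* [qdim A B r]: for k-subspaces B <= A of V, dim_k (A / B) = r, i.e.
   there are r elements of A whose classes modulo B form a basis of A/B. *)
Definition qdim (K : fieldType) (V : lmodType K) (A B : V -> Prop) (r : nat)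
  : Prop :=
  exists s : 'I_r -> V,
    [/\ forall i, A (s i),
        forall c : 'I_r -> K, B (\sum_i c i *: s i) -> forall i, c i = 0
      & forall v, A v -> exists c : 'I_r -> K, B (v - \sum_i c i *: s i)].

Definition mon_span (K : fieldType) (n : nat) (F : 'X_{1..n} -> bool)
  (p : {mpoly K[n]}) : Prop :=
  exists s : seq ('X_{1..n} * K),
    (forall x, x \in s -> F x.1) /\ p = \sum_(x <- s) x.2 *: 'X_[x.1].

Definition RP (K : fieldType) (n : nat) (le : rel 'I_n) (p : {mpoly K[n]})
  : Prop := mon_span (weakP le) p.

Definition mP (K : fieldType) (n : nat) (le : rel 'I_n) (p : {mpoly K[n]})
  : Prop := mon_span (fun f => weakP le f && (f != 0%MM)) p.

Fixpoint mpow (K : fieldType) (n : nat) (le : rel 'I_n) (i : nat)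
  (p : {mpoly K[n]}) : Prop :=
  match i with
  | 0 => RP le p
  | i'.+1 => exists s : seq ({mpoly K[n]} * {mpoly K[n]}),
       (forall x, x \in s -> mpow le i' x.1 /\ mP le x.2) /\
       p = \sum_(x <- s) x.1 * x.2
  end.

Definition homR (K : fieldType) (n : nat) (d : 'X_{1..n})
  (p : {mpoly K[n]}) : Prop :=
  forall m, m \in msupp p -> m = d.

Definition hilb_RP (K : fieldType) (n : nat) (le : rel 'I_n)
  (d : 'X_{1..n}) (h : nat) : Prop :=
  qdim (fun p : {mpoly K[n]} => RP le p /\ homR d p) (fun p => p = 0) h.

(* Hilbert function of gr(R_P) = (+)_i m^i/m^(i+1) at d equals h:
   the degree-d piece is (+)_i (m^i)_d / (m^(i+1))_d, whose dimension is
   the (eventually zero) sum of the dimensions r i of the summands. *)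
Definition hilb_gr (K : fieldType) (n : nat) (le : rel 'I_n)
  (d : 'X_{1..n}) (h : nat) : Prop :=
  exists r : nat -> nat,
    (forall i, qdim (fun p : {mpoly K[n]} => mpow le i p /\ homR d p)
                    (fun p => mpow le i.+1 p /\ homR d p) (r i)) /\
    exists N, (forall i, (N <= i)%N -> r i = 0%N) /\
              (\sum_(i < N) r i)%N = h.

Definition ConnT (n : nat) (le : rel 'I_n) : finType :=
  {J : {set 'I_n} | is_conn_ideal le J}.

(* the variables of S are indexed by 'I_#|ConnT le|; variable i is U_J
   for J = Jvar i *)
Definition Jvar (n : nat) (le : rel 'I_n) (i : 'I_#|ConnT le|)
  : {set 'I_n} := val (@enum_val (ConnT le) predT i).

(* N^n-degree of the monomial prod_J U_J^(a_J): sum_J a_J chi_J *)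
Definition degS (n : nat) (le : rel 'I_n) (a : 'X_{1..#|ConnT le|})
  : 'X_{1..n} :=
  [multinom (\sum_(i < #|ConnT le|) a i * (j \in Jvar i))%N | j < n].

Definition homogS (K : fieldType) (n : nat) (le : rel 'I_n)
  (d : 'X_{1..n}) (p : {mpoly K[#|ConnT le|]}) : Prop :=
  forall a, a \in msupp p -> degS a = d.

Definition Iinit (K : fieldType) (n : nat) (le : rel 'I_n)
  (p : {mpoly K[#|ConnT le|]}) : Prop :=
  exists s : seq ({mpoly K[#|ConnT le|]} * ('I_#|ConnT le| * 'I_#|ConnT le|)),
    (forall x, x \in s -> nontriv_int (Jvar x.2.1) (Jvar x.2.2)) /\
    p = \sum_(x <- s) x.1 * ('X_x.2.1 * 'X_x.2.2).

Definition hilb_SI (K : fieldType) (n : nat) (le : rel 'I_n)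
  (d : 'X_{1..n}) (h : nat) : Prop :=
  qdim (fun p : {mpoly K[#|ConnT le|]} => homogS d p)
       (fun p => Iinit p /\ homogS d p) h.

(* Main.v *)
Require Import Defs.
From HB Require Import structures.
From mathcomp Require Import all_boot all_order all_algebra.
From mathcomp Require Import mpoly.
From Stdlib Require Import Classical ClassicalEpsilon.

Set Implicit Arguments.
Unset Strict Implicit.
Unset Printing Implicit Defensive.

Import GRing.Theory.
Local Open Scope ring_scope.

Definition pb (P : Prop) : bool :=
  if excluded_middle_informative P then true else false.

Lemma pbP (P : Prop) : reflect P (pb P).
Proof. by rewrite /pb; case: excluded_middle_informative => h; constructor. Qed.

Section Q.
Variables (K : fieldType) (V : lmodType K).

Lemma qdim_line (A B : V -> Prop) (e : V) (al be : Prop) :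
  e != 0 ->
  (forall v, A v <-> exists c, v = c *: e /\ (al \/ c = 0)) ->
  (forall v, B v <-> exists c, v = c *: e /\ (be \/ c = 0)) ->
  (be -> al) -> qdim A B (pb (al /\ ~ be)).
Proof.
move=> e0 hA hB hba; case: pbP => H.
- exists (fun _ => e); split.
  + by move=> _; apply/hA; exists 1; rewrite scale1r; split => //; left; case: H.
  + move=> c; rewrite big_ord1 => /hB [c' [hc [//|c'0]]]; first by case: H.
    move: hc; rewrite c'0 scale0r => /eqP; rewrite scaler_eq0 (negbTE e0) orbF.
    by move=> /eqP hc i; rewrite (ord1 i).
  + move=> v /hA [c' [-> _]]; exists (fun _ => c'); rewrite big_ord1 subrr.
    by apply/hB; exists 0; rewrite scale0r; split => //; right.
- exists (fun _ => 0); split.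
  + by move=> _; apply/hA; exists 0; rewrite scale0r; split => //; right.
  + by move=> c _ [m hm].
  + move=> v /hA [c [-> [hal|->]]]; exists (fun _ => 0); rewrite big_ord0 subr0.
      apply/hB; exists c; split => //; left.
      by apply: NNPP => nb; apply: H.
    by apply/hB; exists 0; split => //; right.
Qed.
End Q.

Lemma telesc (Q : nat -> Prop) N : (forall i, Q i.+1 -> Q i) ->
  ((\sum_(i < N) pb (Q i /\ ~ Q i.+1)) + pb (Q N))%N = pb (Q 0).
Proof.
move=> mono; elim: N => [|N IH]; first by rewrite big_ord0.
rewrite big_ord_recr /= -addnA -IH; congr (_ + _)%N.
case: (pbP (Q N.+1)) => h1; case: (pbP (Q N)) => h2;
  case: pbP => h3 //; exfalso; try tauto; exact: h2 (mono _ h1).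
Qed.

Section RP.
Variables (K : fieldType) (n : nat) (le : rel 'I_n).

Lemma mon_spanP (F : 'X_{1..n} -> bool) (p : {mpoly K[n]}) :
  mon_span F p <-> (forall m, m \in msupp p -> F m).
Proof.
split.
- move=> [s [hs ->]] m /msupp_sum_le /flattenP [t /mapP [x xs ->]].
  move=> /msuppZ_le; rewrite msuppX mem_seq1 => /eqP ->; apply: hs; by rewrite filter_predT in xs.
- move=> h; exists [seq (m, p@_m) | m <- msupp p]; split.
  + by move=> x /mapP [m mp ->]; apply: h.
  + by rewrite big_map /= {1}[p]mpolyE.
Qed.

Lemma homR_eq d (p : {mpoly K[n]}) : homR d p -> p = p@_d *: 'X_[d].
Proof.
move=> h; apply/mpolyP => m; rewrite mcoeffZ mcoeffX.
case: (eqVneq d m) => [->|ne]; first by rewrite mulr1.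
rewrite mulr0; apply/eqP; rewrite -[_ == 0]negbK -mcoeff_msupp; apply/negP.
by move=> /h em; rewrite em eqxx in ne.
Qed.

Lemma homR_X d (c : K) : homR d (c *: 'X_[d] : {mpoly K[n]}).
Proof. by move=> m /msuppZ_le; rewrite msuppX mem_seq1 => /eqP. Qed.

Lemma X_neq0 d : ('X_[d] : {mpoly K[n]}) != 0.
Proof.
apply/negP => /eqP h; have := congr1 (mcoeff d) h; rewrite mcoeffX mcoeff0 eqxx => /eqP.
by rewrite oner_eq0.
Qed.

Lemma weakD (a b : 'X_{1..n}) : weakP le a -> weakP le b -> weakP le (a + b)%MM.
Proof.
move=> /forallP ha /forallP hb; apply/forallP => i; apply/forallP => j.
apply/implyP => hij; rewrite !mnmDE.
have := forallP (ha i) j; have := forallP (hb i) j; rewrite hij /=.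
by move=> h1 h2; apply: leq_add.
Qed.

Fixpoint G (i : nat) (m : 'X_{1..n}) : Prop :=
  match i with
  | 0 => weakP le m
  | i'.+1 => exists a b, [/\ G i' a, weakP le b, b != 0%MM & m = (a + b)%MM]
  end.

Lemma G_mono i m : G i.+1 m -> G i m.
Proof.
elim: i m => [|i IH] m /= [a [b [ha hb b0 ->]]]; first exact: weakD.
by exists a, b; split => //; apply: (IH a).
Qed.

Lemma G_deg i m : G i m -> (i <= mdeg m)%N.
Proof.
elim: i m => [//|i IH] m /= [a [b [ha hb b0 ->]]].
rewrite mdegD; have := IH _ ha; have : (0 < mdeg b)%N.
  by rewrite lt0n mdeg_eq0.
by move=> h1 h2; rewrite -addn1; apply: leq_add.
Qed.

Lemma mpow_sound i (p : {mpoly K[n]}) : mpow le i p -> forall m, m \in msupp p -> G i m.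
Proof.
elim: i p => [|i IH] p /=; first by move=> /mon_spanP.
move=> [s [hs ->]] m /msupp_sum_le /flattenP [t /mapP [x xs ->]].
move=> /msuppM_le /allpairsP [[m1 m2] /= [h1 h2 ->]].
rewrite filter_predT in xs; have [hx1 /mon_spanP hx2] := hs x xs.
have /andP [w nz] := hx2 _ h2.
by exists m1, m2; split => //; apply: IH hx1 _ h1.
Qed.

Lemma mpowZ i (c : K) (p : {mpoly K[n]}) : mpow le i p -> mpow le i (c *: p).
Proof.
elim: i c p => [|i IH] c p /=.
  by move=> /mon_spanP h; apply/mon_spanP => m /msuppZ_le /h.
move=> [s [hs ->]]; exists [seq (c *: x.1, x.2) | x <- s]; split.
  by move=> y /mapP [x xs ->] /=; have [h1 h2] := hs x xs; split => //; apply: IH.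
by rewrite big_map scaler_sumr; apply: eq_bigr => x _; rewrite scalerAl.
Qed.

Lemma mpow0 i : mpow le i (0 : {mpoly K[n]}).
Proof.
case: i => [|i] /=.
  by apply/mon_spanP => m; rewrite mcoeff_msupp mcoeff0 eqxx.
by exists [::]; rewrite big_nil.
Qed.

Lemma mpowX i m : G i m -> mpow le i ('X_[m] : {mpoly K[n]}).
Proof.
elim: i m => [|i IH] m /=.
  by move=> h; apply/mon_spanP => m'; rewrite msuppX mem_seq1 => /eqP ->.
move=> [a [b [ha hb b0 ->]]]; exists [:: ('X_[a], 'X_[b])]; split.
  move=> x; rewrite mem_seq1 => /eqP -> /=; split; first exact: IH.
  by apply/mon_spanP => m'; rewrite msuppX mem_seq1 => /eqP ->; rewrite hb b0.
by rewrite big_seq1 mpolyXD.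
Qed.

Lemma mpow_line i d (v : {mpoly K[n]}) :
  (mpow le i v /\ homR d v) <-> exists c, v = c *: 'X_[d] /\ (G i d \/ c = 0).
Proof.
split.
- move=> [hv hd]; exists v@_d; split; first exact: homR_eq.
  case: (eqVneq v@_d 0) => [->|nz]; first by right.
  by left; apply: (mpow_sound hv); rewrite mcoeff_msupp.
- move=> [c [-> h]]; split; last exact: homR_X.
  case: h => [h|->]; first by apply: mpowZ; apply: mpowX.
  by rewrite scale0r; apply: mpow0.
Qed.

Lemma pbG0 d : pb (G 0 d) = weakP le d.
Proof. by case: pbP => /= h; [rewrite h|case: (weakP le d) h]. Qed.

Lemma part_RP d : hilb_RP K le d (weakP le d).
Proof.
have -> : weakP le d = pb (G 0 d /\ ~ False).
  by rewrite -pbG0; case: pbP => h; case: pbP => h'; tauto.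
apply: qdim_line (X_neq0 d) _ _ _ => //.
- by move=> v; apply: (mpow_line 0).
- move=> v; split; first by move=> ->; exists 0; rewrite scale0r; split => //; right.
  by move=> [c [-> [[]|->]]]; rewrite scale0r.
Qed.

Lemma part_gr d : hilb_gr K le d (weakP le d).
Proof.
exists (fun i => pb (G i d /\ ~ G i.+1 d)); split.
  move=> i; apply: qdim_line (X_neq0 d) _ _ _.
  - by move=> v; apply: mpow_line.
  - by move=> v; apply: mpow_line.
  - exact: G_mono.
exists (mdeg d).+1; split.
  move=> i hi; case: pbP => // [[h _]].
  by have := G_deg h; rewrite leqNgt hi.
have := @telesc (fun i => G i d) (mdeg d).+1 (fun i => @G_mono i d).
rewrite pbG0; case: pbP => [/G_deg|_]; first by rewrite ltnn.
by rewrite addn0.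
Qed.
End RP.
Local Close Scope ring_scope.
Section Comb.
Variables (n : nat) (le : rel 'I_n).

Definition Supp (d : 'X_{1..n}) := [set j | 0 < d j].
Definition relS (d : 'X_{1..n}) : rel 'I_n :=
  fun a b => [&& a \in Supp d, b \in Supp d & pcover le a b || pcover le b a].
Definition relJ (J : {set 'I_n}) : rel 'I_n :=
  fun a b => [&& a \in J, b \in J & pcover le a b || pcover le b a].
Definition Cx (d : 'X_{1..n}) x := [set y | (y \in Supp d) && connect (relS d) x y].

Lemma relS_sym d : ssrbool.symmetric (relS d).
Proof. by move=> a b; rewrite /relS andbCA orbC. Qed.

Lemma relJ_sym J : ssrbool.symmetric (relJ J).
Proof. by move=> a b; rewrite /relJ andbCA orbC. Qed.

Lemma weak_le d i j : weakP le d -> plt le i j -> d j <= d i.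
Proof. by move=> /forallP /(_ i) /forallP /(_ j) /implyP; apply. Qed.

Lemma conn_ne J : is_conn_ideal le J -> J != set0.
Proof. by case/and3P. Qed.

Lemma conn_down J x y : is_conn_ideal le J -> x \in J -> le y x -> y \in J.
Proof.
case/and3P => _ /forallP h _ hx hyx.
by have := forallP (h x) y; rewrite hx hyx => /implyP; apply.
Qed.

Lemma conn_conn J x y : is_conn_ideal le J -> x \in J -> y \in J ->
  connect (relJ J) x y.
Proof.
case/and3P => _ _ /forallP h hx hy.
by have := forallP (h x) y; rewrite hx hy => /implyP; apply.
Qed.

Lemma plt_le i j : plt le i j -> le i j.
Proof. by case/andP. Qed.

Hypothesis hP : is_poset le.

Lemma chain y z : le y z -> connect (fun a b => pcover le a b && le b z) y z.
Proof.
move=> hyz.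
move: {2}#|[set k | le y k && le k z]| (leqnn #|[set k | le y k && le k z]|) => m.
elim: m y z hyz => [|m IH] y z hyz hm.
  exfalso; move: hm; rewrite leqn0 => /eqP /cards0_eq /setP /(_ y).
  by rewrite !inE hyz andbT; case: hP => r _ _; rewrite r.
case: (eqVneq y z) => [->|nyz]; first exact: connect0.
case hc: (pcover le y z); first by apply: connect1; rewrite hc /=; case: hP => r _ _; apply: r.
have hlt : plt le y z by rewrite /plt nyz hyz.
move: hc; rewrite /pcover hlt /= => /negbFE /existsP [w /andP [hyw hwz]].
case: hP => refl anti trans.
have hyw' := plt_le hyw; have hwz' := plt_le hwz.
have p1 : [set k | le y k && le k w] \proper [set k | le y k && le k z].
  apply/properP; split.
    apply/subsetP => k; rewrite !inE => /andP [h1 h2]; rewrite h1 /=.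
    exact: (trans _ _ _ h2 hwz').
  exists z; first by rewrite !inE hyz refl.
  rewrite !inE negb_and; apply/orP; right.
  apply/negP => hzw; case/andP: hwz => /negP nwz _; apply: nwz.
  by apply/eqP; apply: anti; rewrite hwz' hzw.
have p2 : [set k | le w k && le k z] \proper [set k | le y k && le k z].
  apply/properP; split.
    apply/subsetP => k; rewrite !inE => /andP [h1 h2]; rewrite h2 andbT.
    exact: (trans _ _ _ hyw' h1).
  exists y; first by rewrite !inE hyz refl.
  rewrite !inE negb_and; apply/orP; left.
  apply/negP => hwy; case/andP: hyw => /negP nwz _; apply: nwz.
  by apply/eqP; apply: anti; rewrite hwy hyw'.
have c1 : connect (fun a b => pcover le a b && le b w) y w.
  apply: IH; first exact: hyw'.
  by rewrite -ltnS; apply: leq_trans hm; apply: proper_card.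
have c2 : connect (fun a b => pcover le a b && le b z) w z.
  apply: IH; first exact: hwz'.
  by rewrite -ltnS; apply: leq_trans hm; apply: proper_card.
apply: connect_trans c2; apply: connect_sub c1 => a b /andP [hab hbw].
by apply: connect1; rewrite hab /=; apply: trans hwz'.
Qed.


Lemma chainS (d : 'X_{1..n}) y z : weakP le d -> le y z -> 0 < d z -> connect (relS d) y z.
Proof.
move=> hw hyz hz; apply: connect_sub (chain hyz) => a b /andP [hab hbz].
have hb : 0 < d b.
  case: (eqVneq b z) => [->//|nbz].
  by apply: leq_trans hz (weak_le hw _); rewrite /plt nbz.
apply: connect1; rewrite /relS !inE hb hab /= andbT.
by apply: leq_trans hb (weak_le hw _); case/andP: hab.
Qed.

Lemma Cx_in (d : 'X_{1..n}) x : 0 < d x -> x \in Cx d x.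
Proof. by move=> h; rewrite inE inE h connect0. Qed.

Lemma Cx_supp (d : 'X_{1..n}) x y : y \in Cx d x -> 0 < d y.
Proof. by rewrite !inE => /andP []. Qed.

Lemma Cx_step (d : 'X_{1..n}) x y z : y \in Cx d x -> connect (relS d) y z -> 0 < d z ->
  z \in Cx d x.
Proof.
rewrite !inE => /andP [_ hxy] hyz hz; rewrite hz /=.
exact: connect_trans hxy hyz.
Qed.

Lemma Cx_absorb (d : 'X_{1..n}) x (J : {set 'I_n}) w :
  (forall y z, y \in J -> z \in J -> connect (relJ J) y z) ->
  (forall y, y \in J -> 0 < d y) -> w \in J -> w \in Cx d x ->
  J \subset Cx d x.
Proof.
move=> hc hs hw hwC; apply/subsetP => y hy; apply: Cx_step hwC _ (hs _ hy).
apply: connect_sub (hc _ _ hw hy) => a b /and3P [ha hb hab].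
by apply: connect1; rewrite /relS !inE hs // hs.
Qed.

Lemma Cx_inside (d : 'X_{1..n}) x (J : {set 'I_n}) :
  (forall y, y \in J -> 0 < d y) -> x \in J ->
  (forall y z, y \in J -> 0 < d z -> z \notin J ->
      ~~ (pcover le y z || pcover le z y)) ->
  Cx d x \subset J.
Proof.
move=> hs hx hno; apply/subsetP => y; rewrite inE => /andP [hy hxy].
have cl : closed (relS d) (mem J).
  move=> a b /and3P []; rewrite !inE => ha hb hab.
  case haJ: (a \in J); case hbJ: (b \in J) => //.
    by have := hno a b haJ hb (negbT hbJ); rewrite hab.
  by have := hno b a hbJ ha (negbT haJ); rewrite orbC hab.
by rewrite -(closed_connect cl hxy).
Qed.

Lemma Cx_path (d : 'X_{1..n}) x p a : a \in Cx d x -> path (relS d) a p ->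
  connect (relJ (Cx d x)) a (last a p).
Proof.
elim: p a => [|b p IH] a ha /=; first by move=> _; exact: connect0.
move=> /andP [hab hp].
have hb : b \in Cx d x.
  apply: Cx_step ha (connect1 hab) _.
  by case/and3P: hab => _; rewrite inE.
apply: connect_trans (IH _ hb hp); apply: connect1.
by rewrite /relJ ha hb; case/and3P: hab.
Qed.

Lemma Cx_conn (d : 'X_{1..n}) x : weakP le d -> 0 < d x -> is_conn_ideal le (Cx d x).
Proof.
move=> hw hx.
have hxC := Cx_in hx.
have cx : forall y, y \in Cx d x -> connect (relJ (Cx d x)) x y.
  move=> y hy; move: (hy); rewrite inE => /andP [_ /connectP [p hp ey]].
  by rewrite ey; apply: Cx_path hxC hp.
apply/and3P; split.
- by apply/set0Pn; exists x.
- apply/forallP => y; apply/forallP => z; apply/implyP => /andP [hy hzy].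
  apply: (Cx_step hy).
    rewrite (sym_connect_sym (@relS_sym d)).
    exact: chainS hw hzy (Cx_supp hy).
  case: (eqVneq z y) => [->|nzy]; first exact: Cx_supp hy.
  by apply: leq_trans (Cx_supp hy) (weak_le hw _); rewrite /plt nzy.
- apply/forallP => y; apply/forallP => z; apply/implyP => /andP [hy hz].
  apply: connect_trans (cx _ hz).
  by rewrite (sym_connect_sym (@relJ_sym _)); apply: cx.
Qed.

Definition dpp (d : 'X_{1..n}) x : 'X_{1..n} :=
  [multinom (d j - (j \in Cx d x)) | j < n].
Definition chi (C : {set 'I_n}) : 'X_{1..n} :=
  [multinom ((j \in C) : nat) | j < n].

Lemma dpp_add (d : 'X_{1..n}) x : d = (dpp d x + chi (Cx d x))%MM.
Proof.
apply/mnmP => j; rewrite mnmDE !mnmE.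
by case hj: (j \in Cx d x); rewrite ?subn0 ?addn0 // subnK // (Cx_supp hj).
Qed.

Lemma dpp_weak (d : 'X_{1..n}) x : weakP le d -> 0 < d x -> weakP le (dpp d x).
Proof.
move=> hw hx; have hC := Cx_conn hw hx.
apply/forallP => i; apply/forallP => j; apply/implyP => hij; rewrite !mnmE.
have dij := weak_le hw hij.
case hj: (j \in Cx d x).
  by rewrite (conn_down hC hj (plt_le hij)); apply: leq_sub2r.
case hi: (i \in Cx d x); rewrite ?subn0 //.
case: (posnP (d j)) => [->//|hdj].
have : j \in Cx d x.
  by apply: Cx_step hi (chainS hw (plt_le hij) hdj) hdj.
by rewrite hj.
Qed.

Lemma dpp_deg (d : 'X_{1..n}) x : 0 < d x -> mdeg (dpp d x) < mdeg d.
Proof.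
move=> hx; rewrite {2}(dpp_add d x) mdegD -{1}[mdeg (dpp d x)]addn0 ltn_add2l.
rewrite lt0n mdeg_eq0; apply/eqP => /mnmP /(_ x); rewrite mnmE mnm0E.
by rewrite (Cx_in hx).
Qed.

End Comb.

Section Mono.
Variables (n : nat) (le : rel 'I_n).
Local Notation N := #|ConnT le|.

Definition stdb (a : 'X_{1..N}) : bool :=
  [forall i, forall j, (0 < a i) && (0 < a j) ==>
     ~~ nontriv_int (@Jvar n le i) (Jvar j)].

Lemma Jconn (i : 'I_N) : is_conn_ideal le (Jvar i).
Proof. exact: (valP (@enum_val (ConnT le) predT i)). Qed.

Lemma Jvar_inj : injective (@Jvar n le).
Proof. by move=> i j /val_inj /enum_val_inj. Qed.

Definition idx (C : {set 'I_n}) (h : is_conn_ideal le C) : 'I_N :=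
  enum_rank (exist _ C h : ConnT le).

Lemma Jvar_idx C (h : is_conn_ideal le C) : Jvar (idx h) = C.
Proof. by rewrite /Jvar /idx enum_rankK. Qed.

Lemma degSE (a : 'X_{1..N}) j : degS a j = \sum_i a i * (j \in Jvar i).
Proof. by rewrite mnmE. Qed.

Lemma degSD (a b : 'X_{1..N}) : degS (a + b)%MM = (degS a + degS b)%MM.
Proof.
apply/mnmP => j; rewrite mnmDE !degSE -big_split /=.
by apply: eq_bigr => i _; rewrite mnmDE mulnDl.
Qed.

Lemma degSU (c : 'I_N) : degS U_(c)%MM = chi (Jvar c).
Proof.
apply/mnmP => j; rewrite degSE mnmE (bigD1 c) //= mnm1E eqxx mul1n big1 ?addn0 //.
by move=> i ne; rewrite mnm1E eq_sym (negbTE ne) mul0n.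
Qed.

Lemma degS0 : degS (0%MM : 'X_{1..N}) = 0%MM.
Proof.
by apply/mnmP => j; rewrite degSE mnm0E big1 // => i _; rewrite mnm0E mul0n.
Qed.

Lemma degS_ge (a : 'X_{1..N}) i j : j \in Jvar i -> a i <= degS a j.
Proof. by move=> hj; rewrite degSE (bigD1 i) //= hj muln1 leq_addr. Qed.

Lemma degS_pos (a : 'X_{1..N}) j : 0 < degS a j ->
  exists i, (0 < a i) && (j \in Jvar i).
Proof.
case: (pickP (fun i => (0 < a i) && (j \in Jvar i))) => [i hi|none].
  by move=> _; exists i.
rewrite degSE big1 // => i _; have := none i.
by case: (posnP (a i)) => [->|_] //= ->; rewrite muln0.
Qed.

Lemma degS_weak (a : 'X_{1..N}) : weakP le (degS a).
Proof.
apply/forallP => i; apply/forallP => j; apply/implyP => hij; rewrite !degSE.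
apply: leq_sum => k _; apply: leq_mul => //.
case hj: (j \in Jvar k) => //.
by rewrite (conn_down (Jconn k) hj (plt_le hij)).
Qed.

Lemma nontrivC (J1 J2 : {set 'I_n}) : nontriv_int J1 J2 = nontriv_int J2 J1.
Proof. by rewrite /nontriv_int setIC; congr (_ && _); apply: andbC. Qed.

Lemma nontriv_sub (J1 J2 : {set 'I_n}) : ~~ nontriv_int J1 J2 ->
  J1 :&: J2 != set0 -> (J1 \subset J2) \/ (J2 \subset J1).
Proof.
rewrite /nontriv_int => h ne; move: h; rewrite ne /= negb_and !negbK.
by case/orP; [left|right].
Qed.

Lemma stdP (a : 'X_{1..N}) i j : stdb a -> 0 < a i -> 0 < a j ->
  ~~ nontriv_int (Jvar i) (Jvar j).
Proof.
move=> /forallP /(_ i) /forallP /(_ j) /implyP h ai aj; apply: h.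
by rewrite ai aj.
Qed.

Lemma pcover_plt i j : pcover le i j -> plt le i j.
Proof. by case/andP. Qed.

Lemma U_lemma (hP : is_poset le) (a : 'X_{1..N}) x : stdb a ->
  0 < degS a x -> exists c, 0 < a c /\ Jvar c = Cx le (degS a) x.
Proof.
move=> hstd hx.
have [i0 P0] := degS_pos hx.
pose P := fun i => (0 < a i) && (x \in Jvar i).
have := @arg_maxnP _ i0 P (fun i => #|Jvar i|) P0.
case=> c /andP [ac xc] maxc.
exists c; split => //.
have hs : forall y, y \in Jvar c -> 0 < degS a y.
  by move=> y hy; apply: leq_trans ac (degS_ge a hy).
apply/eqP; rewrite eqEsubset; apply/andP; split.
- apply: (Cx_absorb (w := x)) => //.
    by move=> y z hy hz; apply: conn_conn (Jconn c) hy hz.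
  exact: Cx_in.
- apply: Cx_inside => // y z hy hz hzn; apply/negP => /orP [hyz|hzy].
  + have hyz' := plt_le (pcover_plt hyz).
    have [k /andP [ak zk]] := degS_pos hz.
    have yk : y \in Jvar k := conn_down (Jconn k) zk hyz'.
    have hnt := stdP hstd ac ak.
    have ne : Jvar c :&: Jvar k != set0.
      by apply/set0Pn; exists y; rewrite inE hy yk.
    case: (nontriv_sub hnt ne) => [sub|sub].
    * have Pk : P k by rewrite /P ak (subsetP sub _ xc).
      have hle := maxc k Pk.
      have : Jvar c \proper Jvar k by apply/properP; split => //; exists z.
      have hle2 : #|Jvar k| <= #|Jvar c| by exact: hle.
      by move/proper_card; rewrite ltnNge hle2.
    * by move: hzn; rewrite (subsetP sub _ zk).
  + have := conn_down (Jconn c) hy (plt_le (pcover_plt hzy)).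
    by rewrite (negbTE hzn).
Qed.

Lemma a_zero (a : 'X_{1..N}) : degS a = 0%MM -> a = 0%MM.
Proof.
move=> h; apply/mnmP => i; rewrite mnm0E; apply/eqP; rewrite -leqn0 leqNgt.
apply/negP => ai; have /set0Pn [y hy] := conn_ne (Jconn i).
by have := degS_ge a hy; rewrite h mnm0E leqNgt ai.
Qed.

Lemma std_sub (a : 'X_{1..N}) c : stdb a -> stdb (a - U_(c))%MM.
Proof.
move=> h; apply/forallP => i; apply/forallP => j; apply/implyP => /andP [hi hj].
apply: (stdP h).
  by apply: leq_trans hi _; rewrite mnmBE leq_subr.
by apply: leq_trans hj _; rewrite mnmBE leq_subr.
Qed.

Lemma subU (a : 'X_{1..N}) c : 0 < a c -> a = (a - U_(c) + U_(c))%MM.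
Proof. by move=> h; rewrite submK // lep1mP -lt0n. Qed.

Lemma nz_pos (d : 'X_{1..n}) : d != 0%MM -> exists x, 0 < d x.
Proof.
move=> nz; case: (pickP (fun x => 0 < d x)) => [x hx|none]; first by exists x.
by case/eqP: nz; apply/mnmP => j; rewrite mnm0E; have := none j => /= /negbT;
  rewrite -leqNgt leqn0 => /eqP.
Qed.

Lemma std_uniq (hP : is_poset le) k (a b : 'X_{1..N}) : mdeg a < k ->
  stdb a -> stdb b -> degS a = degS b -> a = b.
Proof.
elim: k a b => // k IH a b ha sa sb hab.
case: (eqVneq (degS a) 0%MM) => [h0|nz].
  by rewrite (a_zero h0) (a_zero (etrans (esym hab) h0)).
have [x hx] := nz_pos nz.
have [c [ac Jc]] := U_lemma hP sa hx.
have hxb : 0 < degS b x by rewrite -hab.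
have [c' [bc' Jc']] := U_lemma hP sb hxb.
have ecc : c' = c by apply: Jvar_inj; rewrite Jc Jc' hab.
rewrite ecc in bc'.
rewrite (subU ac) (subU bc'); congr (_ + _)%MM; apply: IH.
- by move: ha; rewrite {1}(subU ac) mdegD mdeg1 addn1 ltnS.
- exact: std_sub.
- exact: std_sub.
- have := hab; rewrite {1}(subU ac) {1}(subU bc') !degSD => e.
  apply/mnmP => j; have := congr1 (fun m : 'X_{1..n} => m j) e.
  by rewrite /= !mnmDE => /addIn.
Qed.

Lemma std_exist (hP : is_poset le) k (d : 'X_{1..n}) : mdeg d < k ->
  weakP le d -> exists a : 'X_{1..N}, stdb a /\ degS a = d.
Proof.
elim: k d => // k IH d hd hw.
case: (eqVneq d 0%MM) => [->|nz].
  exists 0%MM; split; last exact: degS0.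
  by apply/forallP => i; apply/forallP => j; rewrite mnm0E.
have [x hx] := nz_pos nz.
have hC := Cx_conn hP hw hx.
set C := Cx le d x in hC.
have [a [sa ea]] := IH (dpp le d x) (leq_trans (dpp_deg le hx) hd) (dpp_weak hP hw hx).
set c := idx hC.
have Jc : Jvar c = C by rewrite Jvar_idx.
have help : forall i, 0 < a i -> ~~ nontriv_int (Jvar i) C.
  move=> i ai.
  have hs : forall y, y \in Jvar i -> 0 < d y.
    move=> y hy; apply: leq_trans (leq_trans ai (degS_ge a hy)) _.
    by rewrite ea mnmE leq_subr.
  case: (eqVneq (Jvar i :&: C) set0) => [e0|ne].
    by rewrite /nontriv_int e0 eqxx.
  have /set0Pn [w] := ne; rewrite inE => /andP [wi wC].
  have sub : Jvar i \subset C.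
    apply: (Cx_absorb (w := w)) => //.
    by move=> y z hy hz; apply: conn_conn (Jconn i) hy hz.
  by rewrite /nontriv_int sub andbF.
exists (a + U_(c))%MM; split.
- apply/forallP => i; apply/forallP => j; apply/implyP; rewrite !mnmDE !mnm1E.
  move=> /andP [hi hj].
  case: (eqVneq c i) hi => [<-|ci]; case: (eqVneq c j) hj => [<-|cj];
    rewrite ?addn1 ?addn0 => hj hi.
  + rewrite /nontriv_int; apply/negP => /and3P [_ /negP h _]; apply: h; exact: subxx.
  + by rewrite nontrivC Jc; apply: help.
  + by rewrite Jc; apply: help.
  + exact: stdP sa hi hj.
- by rewrite degSD degSU ea Jc -dpp_add.
Qed.

End Mono.

Local Open Scope ring_scope.
Section SI.
Variables (K : fieldType) (n : nat) (le : rel 'I_n).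
Local Notation N := #|ConnT le|.

Lemma Iinit0 : Iinit (0 : {mpoly K[N]}).
Proof. by exists [::]; rewrite big_nil. Qed.

Lemma IinitZ c (p : {mpoly K[N]}) : Iinit p -> Iinit (c *: p).
Proof.
move=> [s [hs ->]]; exists [seq (c *: x.1, x.2) | x <- s]; split.
  by move=> y /mapP [x xs ->] /=; apply: hs.
by rewrite big_map scaler_sumr; apply: eq_bigr => x _; rewrite scalerAl.
Qed.

Lemma IinitD (p q : {mpoly K[N]}) : Iinit p -> Iinit q -> Iinit (p + q).
Proof.
move=> [s [hs ->]] [t [ht ->]]; exists (s ++ t); split; last by rewrite big_cat.
by move=> x; rewrite mem_cat => /orP [/hs|/ht].
Qed.

Lemma Iinit_sum (I : eqType) (r : seq I) (F : I -> {mpoly K[N]}) :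
  (forall i, i \in r -> Iinit (F i)) -> Iinit (\sum_(i <- r) F i).
Proof.
elim: r => [|i r IH] h; first by rewrite big_nil; exact: Iinit0.
rewrite big_cons; apply: IinitD; first by apply: h; rewrite mem_head.
by apply: IH => j hj; apply: h; rewrite inE hj orbT.
Qed.

Lemma nontriv_refl (J : {set 'I_n}) : ~~ nontriv_int J J.
Proof. by rewrite /nontriv_int; apply/negP => /and3P [_ /negP h _]; apply: h; exact: subxx. Qed.

Lemma Iinit_nonstd (m : 'X_{1..N}) : ~~ stdb m -> Iinit ('X_[m] : {mpoly K[N]}).
Proof.
move/forallPn => [i /forallPn [j]]; rewrite negb_imply negbK => /andP [/andP [hi hj] hnt].
have ij : i != j.
  by apply/eqP => e; move: hnt; rewrite e; apply/negP; apply: nontriv_refl.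
set m' := (m - (U_(i) + U_(j)))%MM.
have em : m = (m' + (U_(i) + U_(j)))%MM.
  rewrite submK //; apply/mnm_lepP => l; rewrite mnmDE !mnm1E.
  case: (eqVneq i l) => [eil|il]; case: (eqVneq j l) => [ejl|jl] //=.
  - by move: ij; rewrite eil ejl eqxx.
  - by rewrite addn0 -eil.
  - by rewrite -ejl.
exists [:: ('X_[m'], (i, j))]; split.
  by move=> x; rewrite mem_seq1 => /eqP -> /=.
by rewrite big_seq1 /= {1}em !mpolyXD.
Qed.

Lemma Iinit_coef (p : {mpoly K[N]}) u : Iinit p -> stdb u -> p@_u = 0.
Proof.
move=> [s [hs ->]] su; rewrite raddf_sum; apply: big1_seq => x /andP [_ xs].
apply/eqP; rewrite -[_ == 0]negbK -mcoeff_msupp; apply/negP.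
move=> /msuppM_le /allpairsP [[m1 m2] [_ h2 eu]] /=.
move: h2; rewrite /= -mpolyXD msuppX mem_seq1 => /eqP e2.
have hi : (0 < u x.2.1)%N by rewrite eu /= e2 !mnmDE !mnm1E eqxx addnCA add1n.
have hj : (0 < u x.2.2)%N by rewrite eu /= e2 !mnmDE !mnm1E eqxx addn1 addnS.
by have := stdP su hi hj; rewrite hs.
Qed.

Lemma part_SI (hP : is_poset le) d : hilb_SI K le d (weakP le d).
Proof.
case hwd: (weakP le d).
- have [u [su eu]] := std_exist hP (ltnSn (mdeg d)) hwd.
  exists (fun _ => 'X_[u]); split.
  + by move=> _ m; rewrite msuppX mem_seq1 => /eqP ->.
  + move=> c; rewrite big_ord1 => [[hI _]] i; rewrite (ord1 i).
    by have := Iinit_coef hI su; rewrite mcoeffZ mcoeffX eqxx mulr1.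
  + move=> v hv; exists (fun _ => v@_u); rewrite big_ord1.
    set w := v - v@_u *: 'X_[u].
    have hw' : homogS d w.
      move=> m /msuppB_le; rewrite mem_cat => /orP [/hv //|].
      by move/msuppZ_le; rewrite msuppX mem_seq1 => /eqP ->.
    split => //; rewrite [w]mpolyE; apply: Iinit_sum => m hm.
    apply: IinitZ; apply: Iinit_nonstd; apply/negP => sm.
    have mu : m = u.
      exact: (std_uniq hP (ltnSn (mdeg m)) sm su (etrans (hw' m hm) (esym eu))).
    move: hm; rewrite mu mcoeff_msupp /w mcoeffB mcoeffZ mcoeffX eqxx mulr1 subrr.
    by rewrite eqxx.
- have v0 : forall v : {mpoly K[N]}, homogS d v -> v = 0.
    move=> v hv; apply/mpolyP => m; rewrite mcoeff0; apply/eqP.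
    rewrite -[_ == 0]negbK -mcoeff_msupp; apply/negP => /hv em.
    by have := degS_weak m; rewrite em hwd.
  exists (fun _ => 0); split.
  + by move=> _; rewrite /homogS => m; rewrite mcoeff_msupp mcoeff0 eqxx.
  + by move=> c _ [m hm].
  + move=> v /v0 ->; exists (fun _ => 0); rewrite big_ord0 subr0; split.
      exact: Iinit0.
    by move=> m; rewrite mcoeff_msupp mcoeff0 eqxx.
Qed.

End SI.

Theorem proposition6p2 (k : fieldType) (n : nat) (le : rel 'I_n) :
  is_poset le ->
  forall d : 'X_{1..n},
    [/\ hilb_RP k le d (weakP le d),
        hilb_gr k le d (weakP le d)
      & hilb_SI k le d (weakP le d)].
Proof.
move=> hP d; split; [exact: part_RP | exact: part_gr | exact: part_SI].
Qed.
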